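(* Let $G$ be a compact group with Haar probability measure $\lambda$ and let $y\in G$. Let $\nu_y=s_y[\lambda]$ be the image of $\lambda$ under $s_y\colon G\to G\times G$, $s_y(x)=(x,x\oplus y)$. Then for every Borel rectangle $A\times B\subseteq G\times G$, $$\nu_y(A\times B)=\lim_{\mathcal E\in\mathcal B}\nu_{y,\mathcal E}(A\times B),$$ and consequently the net $\{\nu_{y,\mathcal E}\}_{\mathcal E\in\mathcal B}$ converges to $\nu_y$ in the weak$^\ast$ topology of $P(G\times G)$.
   Context: $G=(G,\oplus)$ is a compact Hausdorff group with Haar probability measure $\lambda$; $E\oplus y=\{e\oplus y:e\in E\}$. $\mathcal B$ is the set of all finite partitions of $G$ into Borel sets, directed by refinement ($\mathcal E_1\prec\mathcal E_2$ if $\mathcal E_2$ is finer than $\mathcal E_1$). For $\mathcal E\in\mathcal B$, $\mathcal E^\ast$ is the set of $E\in\mathcal E$ with $\lambda(E)>0$. $\lambda_2$ is the regular Borel extension of $\lambda\otimes\lambda$ on $G\times G$, and $\nu_{y,\mathcal E}(D)=\sum_{E\in\mathcal E^\ast}\lambda_2\big(D\cap(E\times(E\oplus y))\big)/\lambda(E)$ for Borel $D\subseteq G\times G$. $P(X)$ is the space of regular Borel probability measures on $X$ with the weak$^\ast$ topology (as a subset of $\mathcal C(X)^\ast$). The image measure is $g[\mu](A)=\mu(g^{-1}[A])$. *)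

(* Defs.v *)
From HB Require Import structures.
From mathcomp Require Import all_boot all_order all_algebra.
From mathcomp Require Import all_classical all_reals all_analysis.
Set Implicit Arguments. Unset Strict Implicit. Unset Printing Implicit Defensive.
Import Order.TTheory GRing.Theory Num.Theory.
Import numFieldNormedType.Exports.
Local Open Scope classical_set_scope.
Local Open Scope ring_scope.

HB.instance Definition _ (G H : ptopologicalType) := Pointed.on (G * H)%type.

Definition borel (T : ptopologicalType) := g_sigma_algebraType (@open T).

Definition is_compact_group (G : ptopologicalType) (op : G -> G -> G) (e : G)
    (inv : G -> G) : Prop :=
  [/\ (forall x y z, op x (op y z) = op (op x y) z),
      (forall x, op e x = x /\ op x e = x),
      (forall x, op (inv x) x = e /\ op x (inv x) = e),
      continuous (fun p : G * G => op p.1 p.2) /\ continuous inv &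
      hausdorff_space G /\ compact [set: G]].

Definition regular_borel (R : realType) (T : ptopologicalType)
    (mu : set (borel T) -> \bar R) : Prop :=
  forall A : set T, measurable (A : set (borel T)) ->
    mu A = ereal_inf [set mu U | U in [set U : set T | open U /\ A `<=` U]] /\
    mu A = ereal_sup [set mu K | K in [set K : set T | compact K /\ K `<=` A]].

(* Haar probability measure on a compact group: regular, invariant under left
   and right translations (on compact groups Haar measure is bi-invariant). *)
Definition is_haar (R : realType) (G : ptopologicalType) (op : G -> G -> G)
    (lam : set (borel G) -> \bar R) : Prop :=
  [/\ regular_borel lam,
      (forall (x : G) (A : set G), measurable (A : set (borel G)) ->
         lam ((op x) @` A) = lam A) &
      (forall (x : G) (A : set G), measurable (A : set (borel G)) ->
         lam ((fun a => op a x) @` A) = lam A)].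

Definition is_regular_product_ext (R : realType) (G : ptopologicalType)
    (lam : set (borel G) -> \bar R) (lam2 : set (borel (G * G)%type) -> \bar R) : Prop :=
  regular_borel lam2 /\
  forall A B : set G, measurable (A : set (borel G)) -> measurable (B : set (borel G)) ->
    lam2 (A `*` B) = (lam A * lam B)%E.

(* Finite partitions of G into Borel sets, represented by a finite list of blocks
   (distinct positions are disjoint). *)
Definition inP (T : Type) (E : set T) (P : seq (set T)) : Prop :=
  exists2 i, (i < size P)%N & nth set0 P i = E.

Definition borel_partition (G : ptopologicalType) (P : seq (set G)) : Prop :=
  [/\ (forall E, inP E P -> measurable (E : set (borel G))),
      (forall x : G, exists E, inP E P /\ E x) &
      (forall i j, (i < size P)%N -> (j < size P)%N -> i <> j ->
         nth set0 P i `&` nth set0 P j = set0)].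

Definition refines (G : Type) (P2 P1 : seq (set G)) : Prop :=
  forall E2, inP E2 P2 -> exists E1, inP E1 P1 /\ E2 `<=` E1.

Definition partition_net_lim (R : realType) (G : ptopologicalType)
    (u : seq (set G) -> \bar R) (l : \bar R) : Prop :=
  forall eps : R, 0 < eps -> exists P0, borel_partition P0 /\
    forall P, borel_partition P -> refines P P0 -> (`| u P - l | < eps%:E)%E.

Definition rtrans (G : Type) (op : G -> G -> G) (E : set G) (y : G) : set G :=
  (fun a => op a y) @` E.

Definition nu_part (R : realType) (G : ptopologicalType) (op : G -> G -> G)
    (lam : set (borel G) -> \bar R) (lam2 : set (borel (G * G)%type) -> \bar R)
    (y : G) (P : seq (set G)) (D : set (borel (G * G)%type)) : \bar R :=
  (\sum_(E <- P | (0 < lam E)%E)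
     lam2 (D `&` (E `*` rtrans op E y)) * ((fine (lam E))^-1)%:E)%E.

Definition s_map (G : Type) (op : G -> G -> G) (y : G) : G -> G * G :=
  fun x => (x, op x y).

Definition nu_y (R : realType) (G : ptopologicalType) (op : G -> G -> G)
    (lam : set (borel G) -> \bar R) (y : G) : set (borel (G * G)%type) -> \bar R :=
  pushforward lam (s_map op y : borel G -> borel (G * G)%type).

(* Main.v *)
Require Import Defs.
From HB Require Import structures.
From mathcomp Require Import all_boot all_order all_algebra.
From mathcomp Require Import all_classical all_reals all_analysis.
From mathcomp Require Import measurable_realfun.
From mathcomp Require Import lra ring.
Import Order.TTheory GRing.Theory Num.Theory.
Import numFieldNormedType.Exports.
Local Open Scope classical_set_scope.
Local Open Scope ring_scope.
Lemma dist_aux (R : realType) (x y lo hi : R) : lo <= x <= hi -> lo <= y <= hi ->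
  `|x - y| <= hi - lo.
Proof. move=> /andP[h1 h2] /andP[h3 h4]; rewrite ler_norml; apply/andP; split; lra. Qed.

Lemma maxEFin0 (R : realType) (r : R) : Order.max r%:E 0%E = (Num.max r 0)%:E.
Proof. by rewrite !maxEle lee_fin; case: ifP. Qed.
Lemma open_mb (G : ptopologicalType) (A : set G) : open A -> measurable (A : set (borel G)).
Proof. by move=> oA; apply: sub_sigma_algebra. Qed.

Lemma cont_meas {G H : ptopologicalType} (h : G -> H) :
  continuous h -> measurable_fun (setT : set (borel G)) (h : borel G -> borel H).
Proof.
move=> hc; apply: (@measurability _ _ (borel G) (borel H) setT h (@open H) erefl).
move=> _ [B oB <-]; apply: open_mb; rewrite setTI; exact: open_comp.
Qed.

Lemma cont_measR {R : realType} {G : ptopologicalType} (f : G -> R) :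
  continuous f -> measurable_fun (setT : set (borel G)) f.
Proof.
move=> fc; apply: (@measurability _ _ (borel G) R setT f R.-ocitv.-measurable erefl).
move=> _ [B [x _ <-] <-]; rewrite setTI.
have -> : f @^-1` `]x.1, x.2]%classic =
   (f @^-1` [set z | x.1 < z]) `&` ~` (f @^-1` [set z | x.2 < z]).
  apply/seteqP; split => z /=; rewrite in_itv /=.
    by move=> /andP[h1 h2]; split => //=; apply/negP; rewrite -leNgt.
  by move=> [h1 /negP h2]; rewrite h1 /= leNgt.
apply: measurableI; last apply: measurableC.
  by apply: open_mb; apply: open_comp; [move=> *; apply: fc | apply: open_gt].
by apply: open_mb; apply: open_comp; [move=> *; apply: fc | apply: open_gt].
Qed.

Section Grp.
Variables (G : ptopologicalType) (op : G -> G -> G) (e : G) (inv : G -> G).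
Hypothesis hG : is_compact_group op e inv.

Lemma rt_cont (y : G) : continuous (fun a => op a y).
Proof.
case: hG => _ _ _ [hc _] _ x.
have h1 : (fun a => (a, y)) @ x --> (x, y).
  by apply: cvg_pair; [exact: cvg_id | exact: cvg_cst].
exact: (@continuous_comp _ _ _ (fun a => (a, y)) (fun p => op p.1 p.2) x h1 (hc (x, y))).
Qed.

Lemma rtransE (E : set G) (y : G) : rtrans op E y = (fun a => op a (inv y)) @^-1` E.
Proof.
case: hG => hA hE hI _ _.
apply/seteqP; split => a /=.
  by move=> [b Eb <-]; rewrite -hA (proj2 (hI y)) (proj2 (hE b)).
move=> Ea; exists (op a (inv y)) => //.
by rewrite -hA (proj1 (hI y)) (proj2 (hE a)).
Qed.

Lemma rtrans_mb (E : set G) (y : G) : measurable (E : set (borel G)) ->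
  measurable (rtrans op E y : set (borel G)).
Proof.
move=> mE; rewrite rtransE -[X in measurable X]setTI.
exact: (cont_meas _ (rt_cont (inv y)) measurableT _ mE).
Qed.

Lemma preim_rt_mb (B : set G) (y : G) : measurable (B : set (borel G)) ->
  measurable ((fun a => op a y) @^-1` B : set (borel G)).
Proof.
move=> mB; rewrite -[X in measurable X]setTI; exact: (cont_meas _ (rt_cont y) measurableT _ mB).
Qed.
End Grp.
Section Atoms.
Variable (G : ptopologicalType).
Definition atom (n : nat) (S : nat -> set G) (g : {ffun 'I_n -> bool}) : set G :=
  \bigcap_(i in [set: 'I_n]) (if g i then S i else ~` S i).
Arguments atom {n}.
Definition atoms n (S : nat -> set G) : seq (set G) := [seq atom S g | g <- enum {ffun 'I_n -> bool}].

Lemma inP_atoms n (S : nat -> set G) E : inP E (atoms n S) -> exists g : {ffun 'I_n -> bool}, E = atom S g.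
Proof.
move=> [k]; rewrite size_map => kl <-; rewrite (nth_map [ffun=> false]) //.
by eexists.
Qed.

Lemma atoms_same n (S : nat -> set G) E : inP E (atoms n S) ->
  forall (i : 'I_n) x z, E x -> E z -> (S i x <-> S i z).
Proof.
move=> /inP_atoms [g ->] i x z /(_ i I) + /(_ i I).
by case: (g i) => //= h1 h2; split.
Qed.

Lemma atom_inj n (S : nat -> set G) (g1 g2 : {ffun 'I_n -> bool}) x :
  atom S g1 x -> atom S g2 x -> g1 = g2.
Proof.
move=> h1 h2; apply/ffunP => k; move: (h1 k I) (h2 k I).
by case: (g1 k); case: (g2 k).
Qed.

Lemma atoms_partition n (S : nat -> set G) : (forall i, measurable (S i : set (borel G))) ->
  borel_partition (atoms n S).
Proof.
move=> mS; split.
- move=> E /inP_atoms [g ->]; apply: fin_bigcap_measurable; first exact: finite_finset.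
  by move=> i _; case: (g i) => //; apply: measurableC.
- move=> x; pose g := [ffun i : 'I_n => `[< S i x >]].
  exists (atom S g); split; last first.
    by move=> i _; rewrite /g ffunE; case: asboolP.
  exists (index g (enum {ffun 'I_n -> bool})).
    by rewrite size_map index_mem mem_enum.
  by rewrite (nth_map [ffun=> false]) ?nth_index ?mem_enum // index_mem mem_enum.
- move=> i j; rewrite /atoms enumT size_map => il jl ij.
  have uq : uniq (Finite.enum {ffun 'I_n -> bool}) by rewrite -enumT enum_uniq.
  rewrite !(nth_map [ffun=> false]) //.
  have hu := nth_uniq [ffun=> false] il jl uq.
  apply/seteqP; split => // x [h1 h2].
  have e := @atom_inj _ _ _ _ _ h1 h2.
  exfalso; apply: ij; apply/eqP; rewrite -hu; apply/eqP; exact: e.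
Qed.
End Atoms.
Section IntB.
Local Open Scope ereal_scope.
Context d (T : measurableType d) (R : realType) (mu : {measure set T -> \bar R}).

Lemma int_bounds (D : set T) (h : T -> R) (l u : R) : measurable D ->
  measurable_fun D (EFin \o h) -> (forall x, D x -> 0 <= h x)%R -> (0 <= u)%R ->
  (forall x, D x -> l <= h x <= u)%R ->
  l%:E * mu D <= \int[mu]_(x in D) (h x)%:E /\
  \int[mu]_(x in D) (h x)%:E <= u%:E * mu D.
Proof.
move=> mD mh h0 u0 hlu; split.
  case: (leP 0%R l) => l0.
    rewrite -(integral_cst mu mD).
    apply: ge0_le_integral => //.
    by move=> x Dx; rewrite /= lee_fin; case/andP: (hlu x Dx).
  apply: (le_trans _ (integral_ge0 _ _)).
    by apply: mule_le0_ge0 => //; rewrite lee_fin ltW.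
  by move=> x Dx; rewrite lee_fin h0.
rewrite -(integral_cst mu mD); apply: ge0_le_integral => //.
by move=> x Dx; rewrite /= lee_fin; case/andP: (hlu x Dx).
Qed.

Lemma int_restr (D : set T) (mD : measurable D) (h : T -> \bar R) :
  measurable_fun setT h -> (forall x, 0 <= h x) ->
  \int[mrestr mu mD]_(x in setT) h x = \int[mrestr mu mD]_(x in D) h x.
Proof.
move=> mh h0; rewrite -(setUv D) ge0_integral_setU //.
- rewrite (@null_set_integral _ _ _ (mrestr mu mD) (~` D)) ?adde0 //.
  + exact: measurableC.
  + exact: measurable_funS mh.
  + by change (mu (~` D `&` D) = 0); rewrite setICl measure0.
- exact: measurableC.
- by rewrite setUv.
- by rewrite disj_set2E setICr.
Qed.

Lemma mrestr_self (D : set T) (mD : measurable D) : mrestr mu mD D = mu D.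
Proof. by change (mu (D `&` D) = mu D); rewrite setIid. Qed.
End IntB.
Section Main.
Local Open Scope ereal_scope.
Variables (R : realType) (G : ptopologicalType) (op : G -> G -> G) (e : G) (inv : G -> G).
Hypothesis hG : is_compact_group op e inv.
Variable lam : probability (borel G) R.
Hypothesis hlam : is_haar op lam.
Variable lam2 : {measure set (borel (G * G)%type) -> \bar R}.
Hypothesis hlam2 : is_regular_product_ext lam lam2.
Variable y : G.

Lemma nth_mb (P : seq (set G)) k : borel_partition P ->
  measurable (nth set0 P k : set (borel G)).
Proof.
case=> mP _ _; case: (ltnP k (size P)) => kP.
  by apply: mP; exists k.
by rewrite nth_default.
Qed.

Lemma part_cover (P : seq (set G)) (K : set G) : borel_partition P ->
  \big[setU/set0]_(k < size P) (nth set0 P k `&` K) = K.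
Proof.
case=> _ cP _; rewrite -(bigcup_mkord _ (fun k => nth set0 P k `&` K)); apply/seteqP; split.
  by move=> x [k _ []].
move=> x Kx; have [E [[k kP <-] Ex]] := cP x.
by exists k => //.
Qed.

Lemma part_triv (P : seq (set G)) (K : set G) : borel_partition P ->
  trivIset `I_(size P) (fun k => nth set0 P k `&` K).
Proof.
case=> _ _ dP; apply/trivIsetP => i j /= iP jP ij.
apply/seteqP; split => // x [[xi _] [xj _]].
have := dP i j iP jP (fun h => (negP ij) (introT eqP h)).
by move/seteqP => [+ _] => /(_ x (conj xi xj)).
Qed.

Lemma part_sum (P : seq (set G)) (K : set G) : borel_partition P ->
  measurable (K : set (borel G)) ->
  \sum_(k < size P) lam (nth set0 P k `&` K) = lam K.
Proof.
move=> bP mK.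
rewrite -[in RHS](part_cover P K bP) (measure_semi_additive_ord_I lam (F := fun k => nth set0 P k `&` K)) //.
- by move=> k _; apply: measurableI => //; exact: nth_mb.
- exact: part_triv.
- by rewrite (part_cover P K bP).
Qed.

Lemma lam_fin (A : set G) : measurable (A : set (borel G)) -> lam A \is a fin_num.
Proof.
move=> mA; rewrite ge0_fin_numE //; apply: (le_lt_trans (probability_le1 lam mA)).
by rewrite ltry.
Qed.


Lemma pos_nonempty (E : set G) : 0 < lam E -> exists x, E x.
Proof.
move=> h; case: (pselect (exists x, E x)) => // nE; exfalso.
have E0 : E = set0 by apply/seteqP; split => // x Ex; apply: nE; exists x.
by move: h; rewrite E0 measure0 ltxx.
Qed.

Lemma decide_blk (E E1 T : set G) (x0 : G) : E x0 -> E `<=` E1 ->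
  (forall x z, E1 x -> E1 z -> (T x <-> T z)) -> E `<=` T \/ E `&` T = set0.
Proof.
move=> Ex0 EE1 hT; case: (pselect (T x0)) => Tx0.
  by left => z Ez; apply/(hT z x0 (EE1 _ Ez) (EE1 _ Ex0)).
right; apply/seteqP; split => // z [Ez Tz]; apply: Tx0.
by apply/(hT x0 z (EE1 _ Ex0) (EE1 _ Ez)).
Qed.

Definition Cy (B : set G) := (fun a => op a y) @^-1` B.

Lemma block1 (A B E : set G) : measurable (A : set (borel G)) ->
  measurable (B : set (borel G)) -> measurable (E : set (borel G)) -> 0 < lam E ->
  E `<=` A \/ E `&` A = set0 -> E `<=` Cy B \/ E `&` Cy B = set0 ->
  lam2 ((A `*` B) `&` (E `*` rtrans op E y)) * ((fine (lam E))^-1)%:E =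
  lam (E `&` (A `&` Cy B)).
Proof.
move=> mA mB mE lE dA dC.
have mE' := @rtrans_mb G op e inv hG E y mE.
rewrite -setXI (proj2 hlam2 _ _ (measurableI _ _ mA mE) (measurableI _ _ mB mE')).
case: dA => [EA|EA0].
  case: dC => [EC|EC0].
    have -> : A `&` E = E by apply/seteqP; split => [x []//|x Ex]; split => //; exact: EA.
    have -> : B `&` rtrans op E y = rtrans op E y.
      by apply/seteqP; split => [x []//|x [z Ez <-]]; split => //; [exact: EC | exists z].
    have -> : E `&` (A `&` Cy B) = E.
      by apply/seteqP; split => [x []//|x Ex]; split => //; split; [exact: EA | exact: EC].
    case: hlam => _ _ hr; rewrite /rtrans hr //.
    have fE := lam_fin E mE; rewrite -(fineK fE) -!EFinM mulfK //.
    by apply/eqP => h0; move: lE; rewrite -(fineK fE) h0 ltxx.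
  have -> : B `&` rtrans op E y = set0.
    apply/seteqP; split => // x [Bx [z Ez zx]].
    by move/seteqP: EC0 => [+ _] => /(_ z); apply; split => //; rewrite /Cy /= zx.
  have -> : E `&` (A `&` Cy B) = set0.
    by apply/seteqP; split => // x [Ex [_ Cx]]; move/seteqP: EC0 => [+ _] => /(_ x); apply.
  by rewrite measure0 mule0 mul0e.
have -> : A `&` E = set0 by rewrite setIC.
have -> : E `&` (A `&` Cy B) = set0.
  by apply/seteqP; split => // x [Ex [Ax _]]; move/seteqP: EA0 => [+ _] => /(_ x); apply.
by rewrite measure0 !mul0e.
Qed.


Definition S2 (A B : set G) : nat -> set G := fun k => if k == 0%N then A else Cy B.

Lemma S2_mb (A B : set G) : measurable (A : set (borel G)) ->
  measurable (B : set (borel G)) -> forall k, measurable (S2 A B k : set (borel G)).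
Proof.
move=> mA mB k; rewrite /S2; case: (k == 0)%N => //.
exact: (@preim_rt_mb G op e inv hG B y mB).
Qed.

Lemma lam_zero_blk (E K : set G) : measurable (E : set (borel G)) ->
  measurable (K : set (borel G)) -> ~~ (0 < lam E) -> lam (E `&` K) = 0.
Proof.
move=> mE mK hE; apply/eqP; rewrite eq_le measure_ge0 andbT.
apply: (le_trans (le_measure lam _ _ (@subIsetl _ E K))); rewrite ?inE //.
  exact: measurableI.
by rewrite leNgt.
Qed.

Lemma part1 (A B : set G) (P : seq (set G)) : measurable (A : set (borel G)) ->
  measurable (B : set (borel G)) -> borel_partition P -> refines P (@atoms G 2%N (S2 A B)) ->
  nu_part op lam lam2 y P (A `*` B) = lam (A `&` Cy B).
Proof.
move=> mA mB bP rP.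
have mK : measurable (A `&` Cy B : set (borel G)).
  by apply: measurableI => //; exact: (@preim_rt_mb G op e inv hG B y mB).
rewrite /nu_part (big_nth set0) big_mkord.
rewrite -(part_sum P (A `&` Cy B) bP mK).
rewrite [in RHS](bigID (fun i : 'I_(size P) => 0 < lam (nth set0 P i))) /=.
rewrite [X in _ = _ + X]big1 ?adde0; last first.
  by move=> i hi; apply: lam_zero_blk => //; exact: nth_mb.
apply: eq_bigr => i hi.
have [x0 Ex0] := pos_nonempty _ hi.
have [E1 [hE1 sub]] := rP _ (ex_intro2 _ _ (nat_of_ord i) (ltn_ord i) erefl).
apply: block1 => //; first exact: nth_mb.
  apply: (@decide_blk _ _ _ _ Ex0 sub); exact: (@atoms_same _ _ _ _ hE1 (@Ordinal 2 0 isT)).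
apply: (@decide_blk _ _ _ _ Ex0 sub); exact: (@atoms_same _ _ _ _ hE1 (@Ordinal 2 1 isT)).
Qed.

Lemma part1_lim (A B : set G) : measurable (A : set (borel G)) ->
  measurable (B : set (borel G)) ->
  partition_net_lim (fun P => nu_part op lam lam2 y P (A `*` B))
                    (nu_y op lam y (A `*` B)).
Proof.
move=> mA mB eps he; exists (@atoms G 2%N (S2 A B)); split.
  exact: (@atoms_partition G 2%N _ (S2_mb A B mA mB)).
move=> P bP rP; rewrite (part1 A B P mA mB bP rP).
have -> : nu_y op lam y (A `*` B) = lam (A `&` Cy B) by [].
rewrite subee ?abse0 ?lte_fin //.
apply: lam_fin; apply: measurableI => //; exact: (@preim_rt_mb G op e inv hG B y mB).
Qed.


Lemma fst_cont : continuous (@fst G G).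
Proof. by move=> p; apply: cvg_fst. Qed.
Lemma snd_cont : continuous (@snd G G).
Proof. by move=> p; apply: cvg_snd. Qed.

Lemma rect_mb (A B : set G) : measurable (A : set (borel G)) ->
  measurable (B : set (borel G)) -> measurable (A `*` B : set (borel (G * G)%type)).
Proof.
move=> mA mB.
have -> : A `*` B = (fst @^-1` A) `&` (snd @^-1` B) by [].
apply: measurableI; rewrite -[X in measurable X]setTI.
  exact: (cont_meas _ fst_cont measurableT _ mA).
exact: (cont_meas _ snd_cont measurableT _ mB).
Qed.

Definition Dk (P : seq (set G)) k : set (G * G) :=
  nth set0 P k `*` rtrans op (nth set0 P k) y.

Lemma Dk_mb P k : borel_partition P -> measurable (Dk P k : set (borel (G * G)%type)).
Proof.
move=> bP; apply: rect_mb; first exact: nth_mb.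
exact: (@rtrans_mb G op e inv hG _ y (nth_mb P k bP)).
Qed.

Lemma rk_ge0 P k : (0 <= (fine (lam (nth set0 P k)))^-1)%R.
Proof. by rewrite invr_ge0 fine_ge0. Qed.

Definition rk P k : {nonneg R} := NngNum (rk_ge0 P k).

Definition mk P (bP : borel_partition P) : (measure (borel (G * G)%type) R)^nat :=
  fun k => mscale (rk P k) (mrestr lam2 (Dk_mb P k bP)).

Lemma nu_msum P (bP : borel_partition P) :
  nu_part op lam lam2 y P = msum (mk P bP) (size P).
Proof.
apply/funext => D; rewrite /nu_part /msum (big_nth set0) big_mkord big_mkcond /=.
apply: eq_bigr => k _.
change ((if 0 < lam (nth set0 P k) then
  lam2 (D `&` Dk P k) * ((fine (lam (nth set0 P k)))^-1)%:E else 0) =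
  ((fine (lam (nth set0 P k)))^-1)%:E * lam2 (D `&` Dk P k)).
case: ifPn => hk; first by rewrite muleC.
have -> : lam (nth set0 P k) = 0.
  by apply/eqP; rewrite eq_le measure_ge0 andbT leNgt.
by rewrite /= invr0 mul0e.
Qed.


Lemma gmeas (g : G * G -> R) : continuous g ->
  measurable_fun (setT : set (borel (G * G)%type)) (fun z => (g z)%:E).
Proof. by move=> gc; apply/measurable_EFinP; exact: cont_measR. Qed.

Lemma int_nu P (bP : borel_partition P) (g : G * G -> R) : continuous g ->
  (forall z, (0 <= g z)%R) ->
  \int[nu_part op lam lam2 y P]_(z in setT) (g z)%:E =
  \sum_(k < size P) ((rk P k)%:num)%:E *
     \int[mrestr lam2 (Dk_mb P k bP)]_(z in Dk P k) (g z)%:E.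
Proof.
move=> gc g0.
have hm := gmeas g gc.
have h0 : forall z : borel (G * G)%type, setT z -> (0 <= (g z)%:E)%E.
  by move=> z _; rewrite lee_fin.
rewrite (nu_msum P bP) ge0_integral_measure_sum //.
apply: eq_bigr => k _; rewrite ge0_integral_mscale //.
by rewrite int_restr // => z; rewrite lee_fin.
Qed.

Lemma s_cont : continuous (s_map op y).
Proof.
move=> x; apply: cvg_pair; first exact: cvg_id.
exact: (@rt_cont G op e inv hG y x).
Qed.

Lemma part_union (P : seq (set G)) : borel_partition P ->
  \big[setU/set0]_(i <- index_iota 0 (size P)) nth set0 P i = setT.
Proof.
case=> _ cP _; rewrite -bigcup_seq; apply/seteqP; split => // x _.
have [E [[k kP <-] Ex]] := cP x.
by exists k => //=; rewrite mem_index_iota.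
Qed.

Lemma int_nuy P (bP : borel_partition P) (g : G * G -> R) : continuous g ->
  (forall z, (0 <= g z)%R) ->
  \int[nu_y op lam y]_(z in setT) (g z)%:E =
  \sum_(k < size P) \int[lam]_(x in nth set0 P k) (g (s_map op y x))%:E.
Proof.
move=> gc g0.
have ms : measurable_fun (setT : set (borel G)) (s_map op y : borel G -> borel (G * G)%type).
  exact: cont_meas _ s_cont.
rewrite /nu_y (ge0_integral_pushforward ms) //; last 2 first.
  exact: gmeas.
  by move=> z _; rewrite lee_fin.
rewrite preimage_setT -(part_union P bP) ge0_integral_bigsetU //.
- by rewrite big_mkord.
- by move=> k; exact: nth_mb.
- exact: iota_uniq.
- apply/trivIsetP => i j /= iP jP ij; case: bP => _ _ dP; apply: dP.
  + by move: iP; rewrite mem_index_iota.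
  + by move: jP; rewrite mem_index_iota.
  + by move=> h; move/eqP: ij.
- rewrite part_union //; apply/measurable_EFinP.
  have gsc : continuous (fun x => g (s_map op y x)).
    by move=> x; exact: (continuous_comp (s_cont x) (gc _)).
  exact: cont_measR _ gsc.
- by move=> x _; rewrite lee_fin.
Qed.


Lemma block2 P (bP : borel_partition P) (g : G * G -> R) k (eps : R) :
  continuous g -> (forall z, 0 <= g z)%R -> (0 <= eps)%R ->
  (0 < lam (nth set0 P k) -> exists c : R, forall a b, nth set0 P k a ->
      nth set0 P k b -> (`|g (a, op b y) - c| <= eps)%R) ->
  let X := ((rk P k)%:num)%:E *
      \int[mrestr lam2 (Dk_mb P k bP)]_(z in Dk P k) (g z)%:E in
  let Y := \int[lam]_(x in nth set0 P k) (g (s_map op y x))%:E in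
  [/\ X \is a fin_num, Y \is a fin_num &
     (`|fine X - fine Y| <= 2 * eps * fine (lam (nth set0 P k)))%R].
Proof.
move=> gc g0 e0 hc X Y.
have mE := nth_mb P k bP.
set E := nth set0 P k in mE hc X Y *.
have fE := lam_fin E mE.
set m := fine (lam E).
have lEm : lam E = m%:E by rewrite fineK.
have m0 : (0 <= m)%R by rewrite fine_ge0.
have hm := gmeas g gc.
have gsc : continuous (fun x => g (s_map op y x)).
  by move=> x; exact: (continuous_comp (s_cont x) (gc _)).
have mgs : measurable_fun (E : set (borel G)) (fun x => (g (s_map op y x))%:E).
  apply: (measurable_funS measurableT) => //.
  by apply/measurable_EFinP; exact: cont_measR _ gsc.
have Yge0 : 0 <= Y by apply: integral_ge0 => x _; rewrite lee_fin.
case: (boolP (0 < lam E)) => hpos; last first.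
  have l0 : lam E = 0.
    by apply/eqP; rewrite eq_le measure_ge0 andbT leNgt.
  have Y0 : Y = 0 by rewrite /Y null_set_integral.
  have X0 : X = 0 by rewrite /X /= l0 /= invr0 mul0e.
  rewrite X0 Y0 /m l0 /=; split => //.
  by rewrite subr0 normr0 mulr0.
case: (hc hpos) => c hc'.
have [x0 Ex0] := pos_nonempty E hpos.
have u0 : (0 <= c + eps)%R.
  apply: (le_trans (g0 (x0, op x0 y))).
  by move: (hc' x0 x0 Ex0 Ex0); rewrite ler_distl => /andP[].
have [Yl Yu] : ((c - eps)%R)%:E * lam E <= Y /\ Y <= (c + eps)%:E * lam E.
  apply: (@int_bounds _ _ _ lam E (fun x => g (s_map op y x))) => //.
  by move=> x Ex; rewrite -ler_distl; exact: hc'.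
have fY : Y \is a fin_num.
  rewrite ge0_fin_numE //; apply: (le_lt_trans Yu).
  by rewrite lEm -EFinM ltry.
have mpos : (0 < m)%R by rewrite -lte_fin -lEm.
have mD := Dk_mb P k bP.
have mE' := @rtrans_mb G op e inv hG E y mE.
have lE' : lam (rtrans op E y) = lam E by case: hlam => _ _ hr; exact: hr.
have l2D : lam2 (Dk P k) = (m * m)%:E.
  by rewrite /Dk (proj2 hlam2 _ _ mE mE') lE' lEm.
have [Il Iu] : ((c - eps)%R)%:E * (m * m)%:E <=
     \int[mrestr lam2 (Dk_mb P k bP)]_(z in Dk P k) (g z)%:E /\
    \int[mrestr lam2 (Dk_mb P k bP)]_(z in Dk P k) (g z)%:E <= (c + eps)%:E * (m * m)%:E.
  rewrite -l2D -(@mrestr_self _ _ _ lam2 _ mD).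
  apply: (@int_bounds _ _ _ (mrestr lam2 mD) (Dk P k) g) => //.
  - exact: (measurable_funS measurableT).
  - move=> [a b] [/= Ea [b' Eb' <-]]; rewrite -ler_distl; exact: hc'.
set I := \int[mrestr lam2 (Dk_mb P k bP)]_(z in Dk P k) (g z)%:E in Il Iu.
have Ige0 : 0 <= I by apply: integral_ge0 => z _; rewrite lee_fin.
have fI : I \is a fin_num.
  rewrite ge0_fin_numE //; apply: (le_lt_trans Iu).
  by rewrite -EFinM ltry.
have XE : X = (m^-1)%:E * I by [].
have fX : X \is a fin_num by rewrite XE fin_numM.
split => //.
have -> : fine X = (m^-1 * fine I)%R by rewrite XE /= -(fineK fI).
move: Il Iu Yl Yu; rewrite -(fineK fI) -(fineK fY) lEm -!EFinM !lee_fin.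
move=> Il Iu Yl Yu.
have -> : (2 * eps * m = (c + eps) * m - (c - eps) * m)%R by ring.
apply: dist_aux; apply/andP; split => //.
- have -> : ((c - eps) * m = m^-1 * ((c - eps) * (m * m)))%R.
    by field; rewrite gt_eqF.
  by rewrite ler_wpM2l // invr_ge0.
- have -> : ((c + eps) * m = m^-1 * ((c + eps) * (m * m)))%R.
    by field; rewrite gt_eqF.
  by rewrite ler_wpM2l // invr_ge0.
Qed.


Lemma sum_m P : borel_partition P ->
  (\sum_(k < size P) fine (lam (nth set0 P k)) = 1)%R.
Proof.
move=> bP.
have h : \sum_(k < size P) lam (nth set0 P k) = 1.
  rewrite -(probability_setT lam) -(part_sum P setT bP measurableT).
  by apply: eq_bigr => k _; rewrite setIT.
apply: EFin_inj; rewrite -sumEFin -h; apply: eq_bigr => k _.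
by rewrite fineK // lam_fin //; exact: nth_mb.
Qed.

Lemma part2_est P (bP : borel_partition P) (g : G * G -> R) (eps : R) :
  continuous g -> (forall z, 0 <= g z)%R -> (0 <= eps)%R ->
  (forall k : nat, 0 < lam (nth set0 P k) -> exists c : R, forall a b, nth set0 P k a ->
      nth set0 P k b -> (`|g (a, op b y) - c| <= eps)%R) ->
  let I := \int[nu_part op lam lam2 y P]_(z in setT) (g z)%:E in
  let J := \int[nu_y op lam y]_(z in setT) (g z)%:E in
  [/\ I \is a fin_num, J \is a fin_num & (`|fine I - fine J| <= 2 * eps)%R].
Proof.
move=> gc g0 e0 hk I J.
pose Xf := fun k : 'I_(size P) => ((rk P k)%:num)%:E *
      \int[mrestr lam2 (Dk_mb P k bP)]_(z in Dk P k) (g z)%:E.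
pose Yf := fun k : 'I_(size P) => \int[lam]_(x in nth set0 P k) (g (s_map op y x))%:E.
have hb k := block2 P bP g k eps gc g0 e0 (hk k).
have fX k : Xf k \is a fin_num by case: (hb k).
have fY k : Yf k \is a fin_num by case: (hb k).
have hd k : (`|fine (Xf k) - fine (Yf k)| <= 2 * eps * fine (lam (nth set0 P k)))%R.
  by case: (hb k).
have IE : I = (\sum_(k < size P) fine (Xf k))%:E.
  rewrite /I (int_nu P bP g gc g0) -sumEFin; apply: eq_bigr => k _.
  by rewrite fineK.
have JE : J = (\sum_(k < size P) fine (Yf k))%:E.
  rewrite /J (int_nuy P bP g gc g0) -sumEFin; apply: eq_bigr => k _.
  by rewrite fineK.
rewrite IE JE; split => //=.
rewrite -sumrB; apply: (le_trans (ler_norm_sum _ _ _)).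
apply: (le_trans (ler_sum _ (fun k _ => hd k))).
by rewrite -mulr_sumr (sum_m P bP) mulr1.
Qed.


Lemma cover_fam (g : G * G -> R) (eps : R) : continuous g -> (0 < eps)%R ->
  exists n (S : nat -> set G), (forall i, measurable (S i : set (borel G))) /\
    forall E : set G, (forall i, (i < n)%N -> forall x z, E x -> E z -> (S i x <-> S i z)) ->
      forall x0, E x0 -> exists c : R, forall a b, E a -> E b ->
        (`|g (a, op b y) - c| <= eps)%R.
Proof.
move=> gc e0.
have step1 : forall x : G, exists UV : set G * set G,
  [/\ open UV.1, UV.1 x, open UV.2, UV.2 (op x y) &
      forall a b, UV.1 a -> UV.2 b -> (`|g (x, op x y) - g (a, b)| < eps)%R].
  move=> x; have := cvgr_dist_lt _ _ (gc (x, op x y)) _ e0.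
  move=> [[Q R'] [/= nQ nR] sub].
  exists (Q°, R'°); split => /=.
  - exact: open_interior.
  - exact: (nbhs_singleton (nbhs_interior nQ)).
  - exact: open_interior.
  - exact: (nbhs_singleton (nbhs_interior nR)).
  - move=> a b Qa Rb; apply: (sub (a, b)); split; exact: interior_subset.
have [UV hUV] := choice step1.
pose O := fun x : G => (UV x).1 `&` ((fun a => op a y) @^-1` (UV x).2).
have oO : forall x, open (O x).
  move=> x; case: (hUV x) => o1 _ o2 _ _; apply: openI => //.
  by apply: open_comp => // z _; exact: (@rt_cont G op e inv hG y z).
have Ox : forall x, O x x by move=> x; case: (hUV x).
have cG : compact [set: G] by case: hG => _ _ _ _ [].
rewrite compact_cover in cG.
have [D' _ cD'] := cG G setT O (fun i _ => oO i) (fun x _ => ex_intro2 _ (fun i => O i x) x I (Ox x)).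
pose s : seq G := finmap.enum_fset D'.
exists (size s), (fun k => O (nth point s k)); split.
  by move=> k; apply: open_mb.
move=> E hE x0 Ex0.
have [i iD Oix0] := cD' x0 I.
have iS : i \in s by [].
pose k := index i s.
have kS : (k < size s)%N by rewrite index_mem.
have nk : nth point s k = i by rewrite nth_index.
exists (g (i, op i y)) => a b Ea Eb.
have Oa : O i a by rewrite -nk; apply/(hE k kS x0 a Ex0 Ea); rewrite nk.
have Ob : O i b by rewrite -nk; apply/(hE k kS x0 b Ex0 Eb); rewrite nk.
case: (hUV i) => _ _ _ _ hs.
rewrite distrC ltW //; apply: hs; [exact: Oa.1 | exact: Ob.2].
Qed.


Definition fine_wrt (P : seq (set G)) (n : nat) (S : nat -> set G) :=
  forall E, inP E P -> forall i, (i < n)%N -> forall x z, E x -> E z -> (S i x <-> S i z).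

Lemma refines_fine P n S : refines P (@atoms G n S) -> fine_wrt P n S.
Proof.
move=> rP E hE i ilt x z Ex Ez; have [E1 [h1 sub]] := rP E hE.
exact: (@atoms_same _ _ _ _ h1 (Ordinal ilt) x z (sub _ Ex) (sub _ Ez)).
Qed.

Lemma part2_nonneg (g : G * G -> R) : continuous g -> (forall z, 0 <= g z)%R ->
  forall eps : R, (0 < eps)%R ->
  exists n (S : nat -> set G), [/\ (forall i, measurable (S i : set (borel G))),
    \int[nu_y op lam y]_(z in setT) (g z)%:E \is a fin_num &
    forall P, borel_partition P -> fine_wrt P n S ->
      \int[nu_part op lam lam2 y P]_(z in setT) (g z)%:E \is a fin_num /\
      (`|fine (\int[nu_part op lam lam2 y P]_(z in setT) (g z)%:E) -
         fine (\int[nu_y op lam y]_(z in setT) (g z)%:E)| < eps)%R].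
Proof.
move=> gc g0 eps he.
have e4 : (0 < eps / 4)%R by rewrite divr_gt0.
have [n [S [mS hS]]] := cover_fam g (eps / 4) gc e4.
have key : forall P, borel_partition P -> fine_wrt P n S ->
  [/\ \int[nu_part op lam lam2 y P]_(z in setT) (g z)%:E \is a fin_num,
      \int[nu_y op lam y]_(z in setT) (g z)%:E \is a fin_num &
      (`|fine (\int[nu_part op lam lam2 y P]_(z in setT) (g z)%:E) -
         fine (\int[nu_y op lam y]_(z in setT) (g z)%:E)| <= 2 * (eps / 4))%R].
  move=> P bP fw; apply: part2_est => //; first exact: ltW.
  move=> k hk; have [x0 Ex0] := pos_nonempty _ hk.
  case: (ltnP k (size P)) => kP; last by move: Ex0; rewrite nth_default.
  apply: (hS _ _ x0 Ex0) => i ilt x z Ex Ez.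
  exact: (fw _ (ex_intro2 _ _ k kP erefl) i ilt x z Ex Ez).
exists n, S; split => //.
  have bP0 := @atoms_partition G n S mS.
  by case: (key _ bP0 (refines_fine _ _ _ (fun E h => ex_intro _ E (conj h (fun _ x => x))))).
move=> P bP fw; case: (key P bP fw) => fI _ hd; split => //.
apply: (le_lt_trans hd); rewrite -subr_gt0.
have -> : (eps - 2 * (eps / 4) = eps / 2)%R by field.
by rewrite divr_gt0.
Qed.


Lemma nu0 : nu_y op lam y set0 = 0.
Proof. by rewrite /nu_y /pushforward preimage_set0 measure0. Qed.
Lemma nuge0 A : 0 <= nu_y op lam y A.
Proof. by rewrite /nu_y /pushforward; exact: measure_ge0. Qed.
Lemma nusa : semi_sigma_additive (nu_y op lam y).
Proof.
have ms : measurable_fun (setT : set (borel G)) (s_map op y : borel G -> borel (G * G)%type).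
  exact: cont_meas _ s_cont.
move=> F mF tF mUF; rewrite /nu_y /pushforward preimage_bigcup.
apply: measure_semi_sigma_additive.
- by move=> n; rewrite -[X in measurable X]setTI; exact: ms.
- apply/trivIsetP => /= i j _ _ ij; rewrite -preimage_setI.
  by move/trivIsetP : tF => /(_ _ _ _ _ ij) ->//; rewrite preimage_set0.
- by rewrite -preimage_bigcup -[X in measurable X]setTI; exact: ms.
Qed.

Definition nuM : {measure set (borel (G * G)%type) -> \bar R} :=
  HB.pack (nu_y op lam y) (isMeasure.Build _ _ _ (nu_y op lam y) nu0 nuge0 nusa).

Lemma main_thm :
  (forall A B : set G,
     measurable (A : set (borel G)) -> measurable (B : set (borel G)) ->
     partition_net_lim (fun P => nu_part op lam lam2 y P (A `*` B))
                       (nu_y op lam y (A `*` B))) /\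
  (forall f : G * G -> R, continuous f ->
     partition_net_lim
       (fun P => integral (nu_part op lam lam2 y P) setT (fun z : borel (G * G)%type => (f z)%:E))
       (integral (nu_y op lam y) setT (fun z : borel (G * G)%type => (f z)%:E))).
Proof.
split; first exact: part1_lim.
move=> f fc eps he.
pose gp := fun z => Num.max (f z) 0%R.
pose gn := fun z => Num.max (- f z)%R 0%R.
have gpc : continuous gp.
  by move=> z; exact: (@continuous_max R _ f (fun _ => 0%R) z (fc z) (cvg_cst _)).
have gnc : continuous gn.
  move=> z; exact: (@continuous_max R _ (fun x => - f x)%R (fun _ => 0%R) z
    (continuousN (fc z)) (cvg_cst _)).
have gp0 : forall z, (0 <= gp z)%R by move=> z; rewrite /gp le_max lexx orbT.
have gn0 : forall z, (0 <= gn z)%R by move=> z; rewrite /gn le_max lexx orbT.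
have e2 : (0 < eps / 2)%R by rewrite divr_gt0.
have [n1 [S1 [mS1 fJ1 H1]]] := part2_nonneg gp gpc gp0 (eps / 2) e2.
have [n2 [S2 [mS2 fJ2 H2]]] := part2_nonneg gn gnc gn0 (eps / 2) e2.
pose S := fun k => if (k < n1)%N then S1 k else S2 (k - n1)%N.
have mS : forall k, measurable (S k : set (borel G)).
  by move=> k; rewrite /S; case: ifP.
exists (@atoms G (n1 + n2)%N S); split; first exact: atoms_partition.
move=> P bP rP; have fw := refines_fine _ _ _ rP.
have fw1 : fine_wrt P n1 S1.
  move=> E hE i ilt x z Ex Ez.
  have := fw E hE i (ltn_addr _ ilt) x z Ex Ez.
  by rewrite /S ilt.
have fw2 : fine_wrt P n2 S2.
  move=> E hE i ilt x z Ex Ez.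
  have lt2 : (n1 + i < n1 + n2)%N by rewrite ltn_add2l.
  have := fw E hE (n1 + i)%N lt2 x z Ex Ez.
  by rewrite /S ltnNge leq_addr /= addKn.
have [fI1 d1] := H1 P bP fw1.
have [fI2 d2] := H2 P bP fw2.
have dec : forall (M : {measure set (borel (G * G)%type) -> \bar R})
      (mu : set (borel (G * G)%type) -> \bar R), (M : set _ -> \bar R) = mu ->
    integral mu setT (fun z : borel (G * G)%type => (f z)%:E) =
    \int[mu]_(z in setT) (gp z)%:E - \int[mu]_(z in setT) (gn z)%:E.
  move=> M mu <-; rewrite integralE; congr (_ - _); apply: eq_integral => z _.
    by rewrite funeposE maxEFin0.
  by rewrite funenegE -EFinN maxEFin0.
rewrite (dec _ _ (esym (nu_msum P bP))) (dec nuM _ erefl).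
rewrite -(fineK fI1) -(fineK fI2) -(fineK fJ1) -(fineK fJ2) -!EFinB abse_EFin lte_fin.
set a := fine _ in d1 *; set b := fine _ in d2 *.
set c := fine _ in d1 *; set d := fine _ in d2 *.
have -> : (a - b - (c - d) = (a - c) - (b - d))%R by ring.
apply: (le_lt_trans (ler_normB _ _)).
lra.
Qed.

End Main.

Theorem lemma3p3 (R : realType) (G : ptopologicalType) (op : G -> G -> G)
    (e : G) (inv : G -> G) (hG : is_compact_group op e inv)
    (lam : probability (borel G) R) (hlam : is_haar op lam)
    (lam2 : {measure set (borel (G * G)%type) -> \bar R})
    (hlam2 : is_regular_product_ext lam lam2)
    (y : G) :
  (forall A B : set G,
     measurable (A : set (borel G)) -> measurable (B : set (borel G)) ->
     partition_net_lim (fun P => nu_part op lam lam2 y P (A `*` B))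
                       (nu_y op lam y (A `*` B))) /\
  (forall f : G * G -> R, continuous f ->
     partition_net_lim
       (fun P => integral (nu_part op lam lam2 y P) setT (fun z : borel (G * G)%type => (f z)%:E))
       (integral (nu_y op lam y) setT (fun z : borel (G * G)%type => (f z)%:E))).
Proof. exact (@main_thm R G op e inv hG lam hlam lam2 hlam2 y). Qed.
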